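(* Let $n\ge1$, fix $i\in\{1,\dots,n\}$, and let $f,h\in L^2((0,1)^n)$ be real-valued, both not a.e. constant, and set $g=f+h$. If $\mathrm{Cov}(f,h)=(fh)_0-f_0h_0\ge0$, then $$S^g_{T_{x_i}}\le\frac{\Big(\sqrt{S^f_{T_{x_i}}\mathrm{Var}(f)}+\sqrt{S^h_{T_{x_i}}\mathrm{Var}(h)}\Big)^2}{\mathrm{Var}(f)+\mathrm{Var}(h)},$$ and consequently $S^g_{T_{x_i}}\le 2\max\{S^f_{T_{x_i}},S^h_{T_{x_i}}\}$, where the factor $2$ is sharp.
   Context: All integrals are with respect to Lebesgue measure on $(0,1)^n$ (inputs independent, uniform on $[0,1]$). For $\varphi$, $\varphi_0=\int\varphi$ and $\mathrm{Var}(\varphi)=\int\varphi^2-\varphi_0^2$. With $x_{\sim i}=(x_1,\dots,x_{i-1},x_{i+1},\dots,x_n)$, the total Sobol index of $x_i$ for $\varphi$ is $$S^\varphi_{T_{x_i}}=\frac{\int\varphi^2\,dx-\int\big(\int\varphi\,dx_i\big)^2dx_{\sim i}}{\mathrm{Var}(\varphi)}.$$ *)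

(* Defs.v *)
From HB Require Import structures.
From mathcomp Require Import all_boot all_order all_algebra.
From mathcomp Require Import all_classical all_reals all_analysis.
Set Implicit Arguments. Unset Strict Implicit. Unset Printing Implicit Defensive.
Import Order.TTheory GRing.Theory Num.Theory.
Import numFieldNormedType.Exports.
Local Open Scope classical_set_scope.
Local Open Scope ring_scope.

(** Points of R^n are represented as n-tuples (with the library's product
    sigma-algebra on n.-tuple R, generated by the coordinates). *)

Section cube.
Context (R : realType).
Local Notation RL := (measurableTypeR R).

Definition consT n (p : (RL * n.-tuple RL)%type) : n.+1.-tuple RL :=
  [tuple of p.1 :: p.2].

Lemma measurable_consT n : measurable_fun [set: (RL * n.-tuple RL)%type] (@consT n).
Proof.
apply: (@measurable_cons _ _ _ _ (@fst RL (n.-tuple RL)) n (@snd RL (n.-tuple RL))).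
- exact: measurable_fst.
- exact: measurable_snd.
Qed.

HB.instance Definition _ n := isMeasurableFun.Build _ _ _ _ (@consT n)
  (@measurable_consT n).

(** Lebesgue measure on (0,1) (= uniform probability on [0,1]). *)
Definition unif01 : probability RL R := uniform_prob (@ltr01 R).

Fixpoint cube_prob (n : nat) : probability (n.-tuple RL) R :=
  match n return probability (n.-tuple RL) R with
  | 0 => \d_ [tuple]
  | n'.+1 => distribution (product_measure1 unif01 (cube_prob n')) (@consT n')
  end.

End cube.

Section sobol.
Context (R : realType).
Local Notation RL := (measurableTypeR R).

Definition cint n (phi : n.-tuple RL -> R) : R :=
  (\int[cube_prob R n]_x phi x)%R.

Definition inL2 n (phi : n.-tuple RL -> R) : Prop :=
  measurable_fun [set: n.-tuple RL] phi /\
  (cube_prob R n).-integrable [set: n.-tuple RL] (fun x => (phi x ^+ 2)%:E).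

Definition ae_constant n (phi : n.-tuple RL -> R) : Prop :=
  exists c : R, {ae cube_prob R n, forall x, phi x = c}.

Definition mean0 n (phi : n.-tuple RL -> R) : R := cint phi.
Definition Var0 n (phi : n.-tuple RL -> R) : R :=
  cint (fun x => phi x ^+ 2) - mean0 phi ^+ 2.
Definition Cov0 n (phi psi : n.-tuple RL -> R) : R :=
  cint (fun x => phi x * psi x) - mean0 phi * mean0 psi.

Definition setcoord n (x : n.-tuple RL) (i : 'I_n) (t : RL) : n.-tuple RL :=
  [tuple (if j == i then t else tnth x j) | j < n].

Definition int_xi n (i : 'I_n) (phi : n.-tuple RL -> R) (x : n.-tuple RL) : R :=
  (\int[unif01 R]_t phi (setcoord x i t))%R.

(** Since (int phi dx_i) depends only on
    x_{~i}, its integral over x_{~i} against Lebesgue measure on (0,1)^(n-1)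
    equals its integral over x against Lebesgue measure on (0,1)^n. *)
Definition total_sobol n (i : 'I_n) (phi : n.-tuple RL -> R) : R :=
  (cint (fun x => phi x ^+ 2) - cint (fun x => int_xi i phi x ^+ 2))
  / Var0 phi.

End sobol.

(* Main.v *)
Require Import Defs.
From HB Require Import structures.
From mathcomp Require Import all_boot all_order all_algebra.
From mathcomp Require Import all_classical all_reals all_analysis.
From mathcomp Require Import measurable_realfun.
From mathcomp Require Import ring lra.
Import Order.TTheory GRing.Theory Num.Theory.
Import numFieldNormedType.Exports.
Set Implicit Arguments. Unset Strict Implicit. Unset Printing Implicit Defensive.
Local Open Scope classical_set_scope.
Local Open Scope ring_scope.

Section L2.
Context (R : realType) d (T : measurableType d) (P : probability T R).

Definition EI (f : T -> R) : R := (\int[P]_x f x)%R.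
Definition sqi (f : T -> R) := measurable_fun [set: T] f /\
  P.-integrable [set: T] (fun x => (f x ^+ 2)%:E).
Definition Ii (f : T -> R) := P.-integrable [set: T] (EFin \o f).

Lemma normM_le (a b : R) : `|a * b| <= a ^+ 2 + b ^+ 2.
Proof.
rewrite normrM -(real_normK (num_real a)) -(real_normK (num_real b)).
have := normr_ge0 a; have := normr_ge0 b; nra.
Qed.

Lemma Ii_add f g : Ii f -> Ii g -> Ii (fun x => f x + g x).
Proof.
move=> iF iG; apply: (eq_integrable measurableT ((EFin \o f) \+ (EFin \o g))); last first.
  exact: integrableD.
by move=> x _ /=; rewrite EFinD.
Qed.

Lemma Ii_scale c f : Ii f -> Ii (fun x => c * f x).
Proof.
move=> iF; apply: (eq_integrable measurableT (fun x => (c%:E * (EFin \o f) x)%E)); last first.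
  exact: integrableZl.
by move=> x _ /=; rewrite EFinM.
Qed.

Lemma Ii_cst c : Ii (fun=> c).
Proof. exact: finite_measure_integrable_cst. Qed.

Lemma Ii_sq f : sqi f -> Ii (fun x => f x ^+ 2).
Proof. by case. Qed.

Lemma Ii_mul f g : sqi f -> sqi g -> Ii (fun x => f x * g x).
Proof.
move=> [mf if2] [mg ig2].
apply: (@le_integrable _ _ _ _ _ measurableT _ (fun x => ((f x ^+ 2)%:E + (g x ^+ 2)%:E)%E)).
- by apply/measurable_EFinP; exact: measurable_funM.
- move=> x _ /=; rewrite lee_fin.
  rewrite [X in _ <= X]ger0_norm; last by rewrite addr_ge0 // sqr_ge0.
  exact: normM_le.
- exact: integrableD.
Qed.

Lemma sqi_cst c : sqi (fun=> c).
Proof. by split; [exact: measurable_cst | exact: (Ii_cst (c ^+ 2))]. Qed.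

Lemma Ii_sqi f : sqi f -> Ii f.
Proof.
move=> sf; apply: (eq_integrable measurableT (EFin \o (fun x => f x * 1))); last first.
  exact: (Ii_mul sf (sqi_cst 1)).
by move=> x _ /=; rewrite mulr1.
Qed.

Lemma sqi_add f g : sqi f -> sqi g -> sqi (fun x => f x + g x).
Proof.
move=> sf sg; split; first by apply: measurable_funD; [case: sf | case: sg].
have := Ii_mul sf sg; have := Ii_sq sf; have := Ii_sq sg => i1 i2 i3.
have i4 := Ii_add (Ii_add i2 i1) (Ii_scale 2 i3).
apply: (eq_integrable measurableT _ _ _ i4) => x _ /=; congr EFin; ring.
Qed.

Lemma sqi_scale c f : sqi f -> sqi (fun x => c * f x).
Proof.
move=> sf; split; first by apply: measurable_funM; [exact: measurable_cst|case: sf].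
have i4 := Ii_scale (c ^+ 2) (Ii_sq sf).
apply: (eq_integrable measurableT _ _ _ i4) => x _ /=; congr EFin; ring.
Qed.

Lemma EI_add f g : Ii f -> Ii g -> EI (fun x => f x + g x) = EI f + EI g.
Proof. by move=> iF iG; rewrite /EI RintegralD. Qed.

Lemma EI_scale c f : Ii f -> EI (fun x => c * f x) = c * EI f.
Proof. by move=> iF; rewrite /EI RintegralZl. Qed.

Lemma EI_cst c : EI (fun=> c) = c.
Proof. by rewrite /EI Rintegral_cst // (_ : fine (P setT) = 1) ?mulr1 // probability_setT. Qed.
Lemma EI_ext f g : (forall x, f x = g x) -> EI f = EI g.
Proof. by move=> fg; rewrite /EI; apply: eq_Rintegral => x _; rewrite fg. Qed.

Lemma EI_ge0 f : (forall x, 0 <= f x) -> 0 <= EI f.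
Proof. by move=> f0; apply: Rintegral_ge0 => x _. Qed.

Lemma var_id f : sqi f ->
  EI (fun x => (f x - EI f) ^+ 2) = EI (fun x => f x ^+ 2) - EI f ^+ 2.
Proof.
move=> sf; set m := EI f.
rewrite (EI_ext (g := fun x => (f x ^+ 2 + (- 2 * m) * f x) + m ^+ 2));
  last by move=> x; ring.
rewrite EI_add; last 2 first.
- exact: Ii_add (Ii_sq sf) (Ii_scale _ (Ii_sqi sf)).
- exact: Ii_cst.
rewrite EI_add; last 2 first.
- exact: Ii_sq sf.
- exact: Ii_scale _ (Ii_sqi sf).
rewrite EI_scale; last exact: Ii_sqi.
rewrite EI_cst -/m; ring.
Qed.

Lemma jensen f : sqi f -> EI f ^+ 2 <= EI (fun x => f x ^+ 2).
Proof.
move=> sf; rewrite -subr_ge0 -var_id //; apply: EI_ge0 => x; exact: sqr_ge0.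
Qed.

Lemma EI_sq_lin f g c : sqi f -> sqi g ->
  EI (fun x => (f x + c * g x) ^+ 2) =
  EI (fun x => f x ^+ 2) + 2 * c * EI (fun x => f x * g x) +
  c ^+ 2 * EI (fun x => g x ^+ 2).
Proof.
move=> sf sg.
rewrite (EI_ext (g := fun x => (f x ^+ 2 + (2 * c) * (f x * g x)) +
   c ^+ 2 * g x ^+ 2)); last by move=> x; ring.
rewrite EI_add; last 2 first.
- exact: Ii_add (Ii_sq sf) (Ii_scale _ (Ii_mul sf sg)).
- exact: Ii_scale _ (Ii_sq sg).
rewrite EI_add; last 2 first.
- exact: Ii_sq sf.
- exact: Ii_scale _ (Ii_mul sf sg).
rewrite EI_scale; last exact: Ii_mul.
by rewrite EI_scale; last exact: Ii_sq.
Qed.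

End L2.
Arguments EI_ext {R d T P} f g.


Section alg.
Context (R : realType).

Lemma quad_le (a b c : R) : 0 <= a -> 0 <= c ->
  (forall l, 0 <= a + 2 * l * b + l ^+ 2 * c) ->
  b <= Num.sqrt a * Num.sqrt c.
Proof.
move=> a0 c0 H.
have hb : b ^+ 2 <= a * c.
  have [c_gt0|] := ltrP 0 c.
    have := H (- b / c).
    have -> : a + 2 * (- b / c) * b + (- b / c) ^+ 2 * c = a - b ^+ 2 / c.
      by field; rewrite gt_eqF.
    rewrite subr_ge0 => h.
    by rewrite -ler_pdivrMr // mulrC.
  move=> cle0; have c0' : c = 0 by apply/eqP; rewrite eq_le cle0 c0.
  rewrite c0' mulr0.
  have [b0|bn0] := eqVneq b 0; first by rewrite b0 expr0n.
  have := H (- (a + 1) / (2 * b)).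
  have -> : a + 2 * (- (a + 1) / (2 * b)) * b + (- (a + 1) / (2 * b)) ^+ 2 * c
      = - 1.
    rewrite c0' mulr0 addr0; field; exact: bn0.
  by rewrite lerNr oppr0 ler10.
rewrite -sqrtrM //.
apply: (le_trans (ler_norm b)).
by rewrite -sqrtr_sqr ler_wsqrtr.
Qed.

Lemma alg1 (A B C D E F c : R) :
  (A + 2 * c * B + c ^+ 2 * C) - (D + 2 * c * E + c ^+ 2 * F) =
  (A - D) + 2 * c * (B - E) + c ^+ 2 * (C - F).
Proof. ring. Qed.

Lemma alg2 (a b B : R) : 0 <= a -> 0 <= b ->
  B <= Num.sqrt a * Num.sqrt b ->
  a + 2 * 1 * B + 1 ^+ 2 * b <= (Num.sqrt a + Num.sqrt b) ^+ 2.
Proof.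
move=> a0 b0 hB; rewrite sqrrD !sqr_sqrtr // expr1n mulr1 mul1r; lra.
Qed.

Lemma final_alg (Tf Th Tg Vf Vh Vg : R) : 0 <= Tf -> 0 <= Th -> 0 <= Tg ->
  0 < Vf -> 0 < Vh -> Vf + Vh <= Vg ->
  Tg <= (Num.sqrt Tf + Num.sqrt Th) ^+ 2 ->
  Tg / Vg <= (Num.sqrt (Tf / Vf * Vf) + Num.sqrt (Th / Vh * Vh)) ^+ 2 / (Vf + Vh)
  /\ Tg / Vg <= 2 * Num.max (Tf / Vf) (Th / Vh).
Proof.
move=> Tf0 Th0 Tg0 Vf0 Vh0 VV TT.
rewrite !divfK ?gt_eqF //.
have VV0 : 0 < Vf + Vh by rewrite addr_gt0.
have step1 : Tg / Vg <= Tg / (Vf + Vh).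
  rewrite ler_pdivrMr ?(lt_le_trans VV0) // mulrAC ler_pdivlMr //.
  by rewrite ler_wpM2l.
have first : Tg / Vg <= (Num.sqrt Tf + Num.sqrt Th) ^+ 2 / (Vf + Vh).
  apply: (le_trans step1); rewrite ler_pdivrMr // divfK ?gt_eqF //.
split => //; apply: (le_trans first).
set M := Num.max (Tf / Vf) (Th / Vh).
have M0 : 0 <= M by rewrite /M le_max divr_ge0 // ltW.
have hf : Num.sqrt Tf <= Num.sqrt M * Num.sqrt Vf.
  rewrite -sqrtrM // ler_wsqrtr // -ler_pdivrMr //.
  by rewrite /M le_max lexx.
have hh : Num.sqrt Th <= Num.sqrt M * Num.sqrt Vh.
  rewrite -sqrtrM // ler_wsqrtr // -ler_pdivrMr //.
  by rewrite /M le_max lexx orbT.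
rewrite ler_pdivrMr //.
have eM := sqr_sqrtr M0.
have eF := sqr_sqrtr (ltW Vf0).
have eH := sqr_sqrtr (ltW Vh0).
have p0 := sqrtr_ge0 Tf; have q0 := sqrtr_ge0 Th.
have m0 := sqrtr_ge0 M; have f0 := sqrtr_ge0 Vf; have h0 := sqrtr_ge0 Vh.
rewrite -eM -eF -eH.
set p := Num.sqrt Tf in hf p0 *; set q := Num.sqrt Th in hh q0 *.
set m := Num.sqrt M in hf hh m0 *.
set sf := Num.sqrt Vf in hf f0 *; set sh := Num.sqrt Vh in hh h0 *.
have h1 : (p + q) ^+ 2 <= (m * (sf + sh)) ^+ 2.
  rewrite ler_sqr ?nnegrE ?addr_ge0 ?mulr_ge0 ?addr_ge0 //.
  by rewrite mulrDr lerD.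
apply: (le_trans h1).
have := sqr_ge0 (sf - sh); have := sqr_ge0 m; nra.
Qed.

End alg.

Section S.
Context (R : realType).
Local Notation RL := (measurableTypeR R).
Local Notation cube := (cube_prob R).
Local Notation U := (unif01 R).

Lemma tnth_setcoord n (x : n.-tuple RL) i t j :
  tnth (setcoord x i t) j = if j == i then t else tnth x j.
Proof. by rewrite /setcoord tnth_mktuple. Qed.

Lemma measurable_setcoord n (i : 'I_n) :
  measurable_fun [set: (n.-tuple RL * RL)%type] (fun p => setcoord p.1 i p.2).
Proof.
apply/measurable_fun_tnthP => j /=.
rewrite (_ : _ \o _ = fun p => if j == i then p.2 else tnth p.1 j); last first.
  by apply/funext => p /=; rewrite tnth_setcoord.
case: (j == i); first exact: measurable_snd.
apply: (@measurableT_comp _ _ _ _ _ _ (fun x => tnth x j)) => //.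
exact: measurable_tnth.
Qed.

Lemma cube_int_cons n (F : n.+1.-tuple RL -> \bar R) :
  measurable_fun [set: n.+1.-tuple RL] F -> (forall x, 0 <= F x)%E ->
  (\int[cube n.+1]_x F x = \int[U]_s \int[cube n]_y F (consT (s, y)))%E.
Proof.
move=> mF F0 /=.
rewrite ge0_integral_distribution //.
rewrite (fubini_tonelli1 (F \o @consT R n)) //.
- exact: (measurableT_comp mF (@measurable_consT R n)).
- by move=> x; exact: F0.
Qed.


Lemma setcoord_cons0 n s (y : n.-tuple RL) t :
  setcoord (consT (s, y)) ord0 t = consT (t, y).
Proof.
apply: eq_from_tnth => j; rewrite tnth_setcoord.
case: (unliftP ord0 j) => [k ->|->]; last by rewrite eqxx.
by rewrite eq_sym (negbTE (neq_lift _ _)) /consT !tnthS.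
Qed.

Lemma setcoord_consS n s (y : n.-tuple RL) (i : 'I_n) t :
  setcoord (consT (s, y)) (lift ord0 i) t = consT (s, setcoord y i t).
Proof.
apply: eq_from_tnth => j; rewrite tnth_setcoord.
case: (unliftP ord0 j) => [k ->|->].
  by rewrite (inj_eq (@lift_inj _ ord0)) /consT !tnthS tnth_setcoord.
by rewrite (negbTE (neq_lift _ _)).
Qed.

Lemma measurable_resample n (i : 'I_n) (F : n.-tuple RL -> \bar R) :
  measurable_fun [set: n.-tuple RL] F -> (forall x, 0 <= F x)%E ->
  measurable_fun [set: n.-tuple RL] (fun x => \int[U]_t F (setcoord x i t))%E.
Proof.
move=> mF F0.
exact: (measurable_fun_fubini_tonelli_F (fun p => F (setcoord p.1 i p.2))
  (measurableT_comp mF (measurable_setcoord i)) (fun p => F0 _)).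
Qed.

Lemma resample n (i : 'I_n) (F : n.-tuple RL -> \bar R) :
  measurable_fun [set: n.-tuple RL] F -> (forall x, 0 <= F x)%E ->
  (\int[cube n]_x F x = \int[cube n]_x \int[U]_t F (setcoord x i t))%E.
Proof.
elim: n i F => [|n IH] i F mF F0; first by case: i.
have mG := measurable_resample i mF F0.
rewrite cube_int_cons // [RHS]cube_int_cons //; last first.
  by move=> x; apply: integral_ge0 => t _; exact: F0.
case: (unliftP ord0 i) => [j ->|->].
- apply: eq_integral => s _.
  under [RHS]eq_integral => y _ do under eq_integral => t _ do rewrite setcoord_consS.
  apply: (IH j (fun y => F (consT (s, y)))).
  + apply: (measurableT_comp mF).
    apply: (measurableT_comp (@measurable_consT R n)).
    exact: measurable_fun_pair.
  + by move=> y; exact: F0.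
- under [RHS]eq_integral => s _ do under eq_integral => y _ do under eq_integral => t _ do rewrite setcoord_cons0.
  rewrite integral_cst //= probability_setT mule1.
  rewrite (fubini_tonelli (F \o @consT R n)) //.
  + exact: (measurableT_comp mF (@measurable_consT R n)).
  + by move=> x; exact: F0.
Qed.

Lemma measurable_sec n (i : 'I_n) (phi : n.-tuple RL -> R) (x : n.-tuple RL) :
  measurable_fun [set: n.-tuple RL] phi ->
  measurable_fun [set: RL] (fun t => phi (setcoord x i t)).
Proof.
move=> mphi.
have := measurableT_comp (measurable_setcoord i)
  (measurable_fun_pair (measurable_cst x) (@measurable_id _ RL setT)).
move=> ms; exact: (measurableT_comp mphi ms).
Qed.

Lemma measurable_sq2 n (phi : n.-tuple RL -> R) :
  measurable_fun [set: n.-tuple RL] phi ->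
  measurable_fun [set: n.-tuple RL] (fun y => (phi y ^+ 2)%:E).
Proof. by move=> mphi; apply/measurable_EFinP; exact: measurable_funX. Qed.

Lemma ae_sec n (i : 'I_n) (phi : n.-tuple RL -> R) : inL2 phi ->
  {ae cube n, forall x, sqi U (fun t => phi (setcoord x i t))}.
Proof.
move=> [mphi iphi].
set G := fun x => (\int[U]_t (phi (setcoord x i t) ^+ 2)%:E)%E.
have G0 x : (0 <= G x)%E by apply: integral_ge0 => t _; rewrite lee_fin sqr_ge0.
have mG : measurable_fun [set: n.-tuple RL] G.
  apply: (measurable_resample i (measurable_sq2 mphi)).
  by move=> y; rewrite lee_fin sqr_ge0.
have iG : (cube n).-integrable [set: n.-tuple RL] G.
  apply/integrableP; split => //.
  under eq_integral do rewrite gee0_abs //.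
  rewrite /G -(resample i (measurable_sq2 mphi)); last first.
    by move=> y; rewrite lee_fin sqr_ge0.
  move/integrableP: iphi => [_].
  by under eq_integral do rewrite gee0_abs ?lee_fin ?sqr_ge0 //.
have := integrable_ae measurableT iG.
apply: filterS => x /(_ I) Gfin.
split; first exact: measurable_sec.
apply/integrableP; split.
  by apply/measurable_EFinP; apply: measurable_funX; exact: measurable_sec.
under eq_integral do rewrite gee0_abs ?lee_fin ?sqr_ge0 //.
by move: Gfin; rewrite ge0_fin_numE.
Qed.

Lemma funepos_comp n (i : 'I_n) (phi : n.-tuple RL -> R) x :
  ((fun t => (phi (setcoord x i t))%:E)^\+ = fun t => (EFin \o phi)^\+ (setcoord x i t))%E.
Proof. by apply/funext => t; rewrite !funeposE. Qed.

Lemma funeneg_comp n (i : 'I_n) (phi : n.-tuple RL -> R) x :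
  ((fun t => (phi (setcoord x i t))%:E)^\- = fun t => (EFin \o phi)^\- (setcoord x i t))%E.
Proof. by apply/funext => t; rewrite !funenegE. Qed.

Lemma measurable_P n (i : 'I_n) (phi : n.-tuple RL -> R) :
  measurable_fun [set: n.-tuple RL] phi ->
  measurable_fun [set: n.-tuple RL] (int_xi i phi).
Proof.
move=> mphi; rewrite /int_xi /Rintegral.
apply: (measurableT_comp (fine_measurable measurableT)).
under eq_fun do rewrite integralE funepos_comp funeneg_comp.
have mE : measurable_fun [set: n.-tuple RL] (EFin \o phi).
  exact/measurable_EFinP.
apply: emeasurable_funB.
- have h := measurable_resample i (measurable_funepos mE) (fun y => funepos_ge0 (EFin \o phi) y). exact h.
- have h := measurable_resample i (measurable_funeneg mE) (fun y => funeneg_ge0 (EFin \o phi) y). exact h.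
Qed.

Lemma P_sq_le n (i : 'I_n) (phi : n.-tuple RL -> R) : inL2 phi ->
  inL2 (int_xi i phi) /\
  cint (fun x => int_xi i phi x ^+ 2) <= cint (fun x => phi x ^+ 2).
Proof.
move=> [mphi iphi]; have mP := measurable_P i mphi.
have key : (\int[cube n]_x ((int_xi i phi x) ^+ 2)%:E <=
            \int[cube n]_x (phi x ^+ 2)%:E)%E.
  rewrite (resample i (measurable_sq2 mphi)); last first.
    by move=> y; rewrite lee_fin sqr_ge0.
  apply: ae_ge0_le_integral => //.
  - by move=> x _; rewrite lee_fin sqr_ge0.
  - exact: measurable_sq2.
  - by move=> x _; apply: integral_ge0 => t _; rewrite lee_fin sqr_ge0.
  - apply: (measurable_resample i (measurable_sq2 mphi)).
    by move=> y; rewrite lee_fin sqr_ge0.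
  apply: filterS (ae_sec i (conj mphi iphi)) => x sx _ /=.
  have fin := integrable_fin_num measurableT (Ii_sq sx).
  have -> : (\int[U]_t (phi (setcoord x i t) ^+ 2)%:E)%E =
      (EI U (fun t => phi (setcoord x i t) ^+ 2))%:E.
    by rewrite /EI /Rintegral fineK.
  by rewrite lee_fin; exact: (jensen sx).
have i2 : (cube n).-integrable [set: n.-tuple RL]
    (fun x => (int_xi i phi x ^+ 2)%:E).
  apply/integrableP; split; first exact: measurable_sq2.
  under eq_integral do rewrite gee0_abs ?lee_fin ?sqr_ge0 //.
  apply: (le_lt_trans key).
  move/integrableP: iphi => [_].
  by under eq_integral do rewrite gee0_abs ?lee_fin ?sqr_ge0 //.
split; first by split.
rewrite /cint /Rintegral; apply: fine_le => //.
- exact: (integrable_fin_num measurableT i2).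
- exact: (integrable_fin_num measurableT iphi).
Qed.

Lemma P_lin n (i : 'I_n) (phi psi : n.-tuple RL -> R) c :
  inL2 phi -> inL2 psi ->
  {ae cube n, forall x, int_xi i (fun y => phi y + c * psi y) x =
                        int_xi i phi x + c * int_xi i psi x}.
Proof.
move=> L1 L2; apply: filterS2 (ae_sec i L1) (ae_sec i L2) => x s1 s2.
have := EI_add (Ii_sqi s1) (Ii_scale c (Ii_sqi s2)).
rewrite EI_scale; last exact: Ii_sqi.
by [].
Qed.

Lemma ae_Rint d (T : measurableType d) (mu : {measure set T -> \bar R})
  (f g : T -> R) :
  measurable_fun [set: T] f -> measurable_fun [set: T] g ->
  {ae mu, forall x, f x = g x} -> (\int[mu]_x f x = \int[mu]_x g x)%R.
Proof.
move=> mf mg ae; rewrite /Rintegral; congr fine.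
apply: ae_eq_integral => //.
- exact/measurable_EFinP.
- exact/measurable_EFinP.
by apply: filterS ae => x -> _.
Qed.

Lemma cintE n (phi : n.-tuple RL -> R) : cint phi = EI (cube n) phi.
Proof. by []. Qed.

Definition Tq n (i : 'I_n) (phi : n.-tuple RL -> R) :=
  cint (fun x => phi x ^+ 2) - cint (fun x => int_xi i phi x ^+ 2).

Lemma Tq_ge0 n (i : 'I_n) phi : inL2 phi -> 0 <= Tq i phi.
Proof. by move=> L; rewrite /Tq subr_ge0; case: (P_sq_le i L). Qed.

Lemma inL2_lin n (f h : n.-tuple RL -> R) c : inL2 f -> inL2 h ->
  inL2 (fun y => f y + c * h y).
Proof. by move=> Lf Lh; apply: sqi_add Lf (sqi_scale c Lh). Qed.

Lemma Tq_lin n (i : 'I_n) f h c : inL2 f -> inL2 h ->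
  Tq i (fun y => f y + c * h y) = Tq i f +
    2 * c * (cint (fun x => f x * h x) -
             cint (fun x => int_xi i f x * int_xi i h x)) + c ^+ 2 * Tq i h.
Proof.
move=> Lf Lh.
have [Lpf _] := P_sq_le i Lf; have [Lph _] := P_sq_le i Lh.
have e2 : cint (fun x => int_xi i (fun y => f y + c * h y) x ^+ 2) =
          cint (fun x => (int_xi i f x + c * int_xi i h x) ^+ 2).
  apply: ae_Rint.
  - apply: measurable_funX; apply: measurable_P.
    by case: (inL2_lin c Lf Lh).
  - by apply: measurable_funX; case: (inL2_lin c Lpf Lph).
  by apply: filterS (P_lin i c Lf Lh) => x ->.
rewrite /Tq e2 !cintE /=.
rewrite (EI_sq_lin c Lf Lh) (EI_sq_lin c Lpf Lph).
exact: alg1.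
Qed.

Lemma Tq_tri n (i : 'I_n) f h : inL2 f -> inL2 h ->
  Tq i (fun y => f y + h y) <= (Num.sqrt (Tq i f) + Num.sqrt (Tq i h)) ^+ 2.
Proof.
move=> Lf Lh.
have Tf0 := Tq_ge0 i Lf; have Th0 := Tq_ge0 i Lh.
pose B := cint (fun x => f x * h x) -
             cint (fun x => int_xi i f x * int_xi i h x).
have Hq : forall l, 0 <= Tq i f + 2 * l * B + l ^+ 2 * Tq i h.
  by move=> l; have := Tq_ge0 i (inL2_lin l Lf Lh); rewrite Tq_lin.
have hB := quad_le Tf0 Th0 Hq.
have -> : (fun y => f y + h y) = (fun y => f y + 1 * h y).
  by apply/funext => y; rewrite mul1r.
rewrite Tq_lin //; exact: alg2.
Qed.

Lemma Var_add n (f h : n.-tuple RL -> R) : inL2 f -> inL2 h ->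
  Var0 (fun x => f x + h x) = Var0 f + Var0 h + 2 * Cov0 f h.
Proof.
move=> Lf Lh; rewrite /Var0 /Cov0 /mean0 !cintE.
have e1 := EI_sq_lin 1 Lf Lh.
have -> : EI (cube n) (fun x => (f x + h x) ^+ 2) =
          EI (cube n) (fun x => (f x + 1 * h x) ^+ 2).
  by apply: EI_ext => x; rewrite mul1r.
rewrite e1 /= EI_add; [|exact: Ii_sqi Lf|exact: Ii_sqi Lh].
ring.
Qed.

Lemma Var_ge0 n (f : n.-tuple RL -> R) : inL2 f -> 0 <= Var0 f.
Proof. by move=> L; rewrite /Var0 /mean0 subr_ge0; exact: jensen. Qed.

Lemma Var_pos n (f : n.-tuple RL -> R) : inL2 f -> ~ ae_constant f ->
  0 < Var0 f.
Proof.
move=> L nc; rewrite lt_def Var_ge0 // andbT.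
apply/eqP => V0; apply: nc.
pose m := EI (cube n) f.
have L2 : sqi (cube n) (fun x => f x - m).
  have -> : (fun x => f x - m) = (fun x => f x + (- m) * 1).
    by apply/funext => x; rewrite mulr1.
  exact: sqi_add L (sqi_scale _ (sqi_cst _ 1)).
have E0 : EI (cube n) (fun x => (f x - m) ^+ 2) = 0.
  by rewrite var_id.
have fin := integrable_fin_num measurableT (Ii_sq L2).
rewrite /= in fin.
have Z : (\int[cube n]_x ((f x - m) ^+ 2)%:E = 0)%E.
  rewrite -(fineK fin).
  by move: E0; rewrite /EI /Rintegral => ->.
have mF : measurable_fun [set: n.-tuple RL] (fun x => ((f x - m) ^+ 2)%:E).
  by apply: measurable_sq2; case: L2.
have /(ae_eq_integral_abs _ measurableT mF).1 : 
    (\int[cube n]_x `|((f x - m) ^+ 2)%:E| = 0)%E.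
  by under eq_integral do rewrite gee0_abs ?lee_fin ?sqr_ge0 //.
move=> ae; exists m; apply: filterS ae => x /(_ I) /= /eqP.
by rewrite eqe sqrf_eq0 subr_eq0 => /eqP.
Qed.

Lemma part1 n (i : 'I_n) (f h : n.-tuple RL -> R) :
  inL2 f -> inL2 h -> ~ ae_constant f -> ~ ae_constant h ->
  0 <= Cov0 f h ->
  let g := fun x => f x + h x in
  total_sobol i g <=
    (Num.sqrt (total_sobol i f * Var0 f)
     + Num.sqrt (total_sobol i h * Var0 h)) ^+ 2 / (Var0 f + Var0 h)
  /\ total_sobol i g <= 2 * Num.max (total_sobol i f) (total_sobol i h).
Proof.
move=> Lf Lh nf nh cov g.
have Vf := Var_pos Lf nf; have Vh := Var_pos Lh nh.
have Lg : inL2 g by exact: sqi_add Lf Lh.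
have VV : Var0 f + Var0 h <= Var0 g.
  by rewrite /g Var_add // lerDl mulr_ge0.
exact: (final_alg (Tq_ge0 i Lf) (Tq_ge0 i Lh) (Tq_ge0 i Lg) Vf Vh VV
  (Tq_tri i Lf Lh)).
Qed.

End S.


Section P2.
Context (R : realType).
Local Notation RL := (measurableTypeR R).
Local Notation cube := (cube_prob R).
Local Notation U := (unif01 R).

Definition A2 : set R := `[0, 2^-1]%classic.
Definition u (t : R) : R := \1_A2 t.
Definition j1 : 'I_2 := lift ord0 ord0.
Definition wa (x : 2.-tuple RL) : R := u (tnth x ord0).
Definition wb (x : 2.-tuple RL) : R := u (tnth x j1).

Lemma mA2 : measurable A2.
Proof. exact: measurable_itv. Qed.

Lemma mu_u : measurable_fun [set: RL] u.
Proof. exact: measurable_indic mA2. Qed.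

Lemma u_sq t : u t ^+ 2 = u t.
Proof. by rewrite /u indicE; case: (t \in A2); rewrite ?expr1n ?expr0n. Qed.

Lemma u_ge0 t : 0 <= u t.
Proof. by rewrite /u indicE; case: (t \in A2). Qed.

Lemma u_le1 t : u t <= 1.
Proof. by rewrite /u indicE; case: (t \in A2). Qed.

Lemma int_cst_prob d (T : measurableType d) (P : probability T R) (r : \bar R) :
  (\int[P]_x (fun _ => r) x = r)%E.
Proof.
rewrite integral_cst //; apply: (@eq_trans _ _ (r * 1)%E); last exact: mule1.
by congr (_ * _)%E; exact: probability_setT.
Qed.

Lemma U_u : (\int[U]_t (u t)%:E = (2^-1)%:E)%E.
Proof.
rewrite integral_indic //; last exact: mA2.
rewrite setIT.
change ((\int[lebesgue_measure]_(x in A2) (uniform_pdf 0 1 x)%:E)%E = (2^-1)%:E).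
rewrite integral_uniform_pdf.
rewrite setIidl; last first.
  move=> x; rewrite /A2 /= !in_itv /= => /andP[-> h] /=.
  lra.
rewrite (eq_integral (fun=> 1%:E)); last first.
  move=> x; rewrite inE /A2 /= in_itv /= => /andP[x0 h].
  have x1 : x <= 1 by lra.
  by rewrite /uniform_pdf x0 x1 /= subr0 invr1.
rewrite integral_cst //; last exact: mA2.
rewrite mul1e /A2.
have := @lebesgue_measure_itv R `[0, 2^-1]%R.
rewrite /= lte_fin invr_gt0 ltr0n /= oppr0 adde0 => <-.
by [].
Qed.

Lemma tnth_cons0 n s (y : n.-tuple RL) : tnth (consT (s, y)) ord0 = s.
Proof. by []. Qed.

Lemma tnth_consS n s (y : n.-tuple RL) j :
  tnth (consT (s, y)) (lift ord0 j) = tnth y j.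
Proof. exact: tnthS. Qed.

Lemma m_u_tnth n (j : 'I_n) :
  measurable_fun [set: n.-tuple RL] (fun y => (u (tnth y j))%:E).
Proof.
apply/measurable_EFinP.
exact: (measurableT_comp mu_u (measurable_tnth j)).
Qed.

Lemma c1 : (\int[cube 1]_y (u (tnth y ord0))%:E = (2^-1)%:E)%E.
Proof.
rewrite cube_int_cons; last 2 first.
- exact: m_u_tnth.
- by move=> x; rewrite lee_fin u_ge0.
under eq_integral => s _ do under eq_integral => z _ do rewrite tnth_cons0.
under eq_integral => s _ do rewrite int_cst_prob.
exact: U_u.
Qed.

Lemma c_a : (\int[cube 2]_x (wa x)%:E = (2^-1)%:E)%E.
Proof.
rewrite cube_int_cons; last 2 first.
- exact: m_u_tnth.
- by move=> x; rewrite lee_fin u_ge0.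
under eq_integral => s _ do under eq_integral => z _ do rewrite /wa tnth_cons0.
under eq_integral => s _ do rewrite int_cst_prob.
exact: U_u.
Qed.

Lemma c_b : (\int[cube 2]_x (wb x)%:E = (2^-1)%:E)%E.
Proof.
rewrite cube_int_cons; last 2 first.
- exact: m_u_tnth.
- by move=> x; rewrite lee_fin u_ge0.
under eq_integral => s _ do under eq_integral => z _ do
  rewrite /wb /j1 tnth_consS.
under eq_integral => s _ do rewrite c1.
by rewrite int_cst_prob.
Qed.

Lemma inner_ab s :
  (\int[cube 1]_z ((u s)%:E * (u (tnth z ord0))%:E) = (u s)%:E * (2^-1)%:E)%E.
Proof.
rewrite ge0_integralZl //.
- by rewrite c1.
- exact: m_u_tnth.
- by move=> x _; rewrite lee_fin u_ge0.
- by rewrite lee_fin u_ge0.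
Qed.

Lemma c_ab : (\int[cube 2]_x (wa x * wb x)%:E = (2^-1 * 2^-1)%:E)%E.
Proof.
rewrite cube_int_cons; last 2 first.
- apply/measurable_EFinP; apply: measurable_funM.
  + exact: (measurableT_comp mu_u (measurable_tnth ord0)).
  + exact: (measurableT_comp mu_u (measurable_tnth j1)).
- by move=> x; rewrite lee_fin mulr_ge0 // u_ge0.
under eq_integral => s _ do under eq_integral => z _ do
  rewrite /wa /wb /j1 tnth_consS tnth_cons0 EFinM.
under eq_integral => s _ do rewrite inner_ab.
rewrite ge0_integralZr //.
- by rewrite U_u EFinM.
- by apply/measurable_EFinP; exact: mu_u.
- by move=> x _; rewrite lee_fin u_ge0.
Qed.

Lemma L_u (j : 'I_2) : inL2 (fun x : 2.-tuple RL => u (tnth x j)).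
Proof.
have mj : measurable_fun [set: 2.-tuple RL] (fun x : 2.-tuple RL => u (tnth x j)).
  exact: (measurableT_comp mu_u (measurable_tnth j)).
split => //.
apply: (@le_integrable _ _ _ _ _ measurableT _ (EFin \o (fun=> (1 : R)))).
- by apply/measurable_EFinP; exact: measurable_funX.
- move=> x _ /=; rewrite lee_fin u_sq normr1 ger0_norm ?u_ge0 ?u_le1 //.
- exact: (Ii_cst _ 1).
Qed.

Lemma L_a : inL2 wa. Proof. exact: L_u. Qed.
Lemma L_b : inL2 wb. Proof. exact: L_u. Qed.

Lemma E_a : EI (cube 2) wa = 2^-1.
Proof. by rewrite /EI /Rintegral c_a. Qed.
Lemma E_b : EI (cube 2) wb = 2^-1.
Proof. by rewrite /EI /Rintegral c_b. Qed.
Lemma E_ab : EI (cube 2) (fun x => wa x * wb x) = 2^-1 * 2^-1.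
Proof. by rewrite /EI /Rintegral c_ab. Qed.
Lemma E_a2 : EI (cube 2) (fun x => wa x ^+ 2) = 2^-1.
Proof. by rewrite (EI_ext _ (wa)) ?E_a // => x; rewrite /wa u_sq. Qed.
Lemma E_b2 : EI (cube 2) (fun x => wb x ^+ 2) = 2^-1.
Proof. by rewrite (EI_ext _ (wb)) ?E_b // => x; rewrite /wb u_sq. Qed.
Lemma E_aa : EI (cube 2) (fun x => wa x * wa x) = 2^-1.
Proof. by rewrite (EI_ext _ (wa)) ?E_a // => x; rewrite -expr2 /wa u_sq. Qed.

Lemma P_a x : int_xi ord0 wa x = 2^-1.
Proof.
rewrite /int_xi.
under eq_Rintegral => t _ do rewrite /wa tnth_setcoord eqxx.
by rewrite /Rintegral U_u.
Qed.

Lemma P_b x : int_xi ord0 wb x = wb x.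
Proof.
rewrite /int_xi.
under eq_Rintegral => t _ do rewrite /wb tnth_setcoord.
have -> : (j1 == ord0) = false by [].
exact: (EI_cst U (wb x)).
Qed.

Lemma T_a : Tq ord0 wa = 2^-1 - 2^-1 * 2^-1.
Proof.
rewrite /Tq !cintE E_a2.
by rewrite (EI_ext _ (fun=> (2^-1) ^+ 2)) ?EI_cst ?expr2 // => x; rewrite P_a.
Qed.

Lemma T_b : Tq ord0 wb = 0.
Proof.
rewrite /Tq !cintE.
by rewrite (EI_ext (fun x => int_xi ord0 wb x ^+ 2) (fun x => wb x ^+ 2))
  ?subrr // => x; rewrite P_b.
Qed.

Lemma B_ab : cint (fun x => wa x * wb x) -
  cint (fun x => int_xi ord0 wa x * int_xi ord0 wb x) = 0.
Proof.
rewrite !cintE E_ab.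
rewrite (EI_ext _ (fun x => 2^-1 * wb x)); last by move=> x; rewrite P_a P_b.
by rewrite EI_scale ?E_b ?subrr //; exact: Ii_sqi L_b.
Qed.

Lemma B_aa : cint (fun x => wa x * wa x) -
  cint (fun x => int_xi ord0 wa x * int_xi ord0 wa x) = 2^-1 - 2^-1 * 2^-1.
Proof.
rewrite !cintE E_aa.
by rewrite (EI_ext _ (fun=> 2^-1 * 2^-1)) ?EI_cst // => x; rewrite P_a.
Qed.

Lemma V_a : Var0 wa = 2^-1 - 2^-1 * 2^-1.
Proof. by rewrite /Var0 /mean0 !cintE E_a2 E_a expr2. Qed.
Lemma V_b : Var0 wb = 2^-1 - 2^-1 * 2^-1.
Proof. by rewrite /Var0 /mean0 !cintE E_b2 E_b expr2. Qed.

Lemma aec_var0 n (phi : n.-tuple RL -> R) : inL2 phi -> ae_constant phi ->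
  Var0 phi = 0.
Proof.
move=> [mphi _] [c ae].
rewrite /Var0 /mean0.
have -> : cint (fun x => phi x ^+ 2) = c ^+ 2.
  transitivity (EI (cube n) (fun=> c ^+ 2)); last exact: EI_cst.
  apply: ae_Rint.
  - exact: measurable_funX.
  - exact: measurable_cst.
  by apply: filterS ae => x ->.
have -> : cint phi = c.
  transitivity (EI (cube n) (fun=> c)); last exact: EI_cst.
  apply: ae_Rint => //.
by rewrite subrr.
Qed.

Lemma lin3 (X Y Z a b k : R) : X = a -> Y = b -> Z = 0 ->
  X + 2 * k * Z + k ^+ 2 * Y = a + k ^+ 2 * b.
Proof. by move=> -> -> ->; ring. Qed.

Lemma lin3' (X Z a b k : R) : X = a -> Z = b ->
  X + 2 * k * Z + k ^+ 2 * X = a + 2 * k * b + k ^+ 2 * a.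
Proof. by move=> -> ->. Qed.

Lemma part2 (c : R) : c < 2 ->
  exists (n : nat) (i : 'I_n) (f h : n.-tuple RL -> R),
    (0 < n)%N /\ inL2 f /\ inL2 h /\ ~ ae_constant f /\ ~ ae_constant h /\
    0 <= Cov0 f h /\
    c * Num.max (total_sobol i f) (total_sobol i h)
      < total_sobol i (fun x => f x + h x).
Proof.
move=> c2.
pose nb := fun x : 2.-tuple RL => - wb x.
have L_nb : inL2 nb.
  have -> : nb = (fun x => (-1) * wb x) by apply/funext => x; rewrite mulN1r.
  exact: sqi_scale _ L_b.
have ef : (fun x => wa x + wb x) = (fun x => wa x + 1 * wb x).
  by apply/funext => x; rewrite mul1r.
have eh : (fun x => wa x - wb x) = (fun x => wa x + (-1) * wb x).
  by apply/funext => x; rewrite mulN1r.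
have eg : (fun x => (wa x + wb x) + (wa x - wb x)) = (fun x => wa x + 1 * wa x).
  by apply/funext => x; rewrite mul1r addrACA subrr addr0.
have Lf : inL2 (fun x => wa x + wb x) by exact: sqi_add L_a L_b.
have Lh : inL2 (fun x => wa x - wb x) by exact: sqi_add L_a L_nb.
have Tf : Tq ord0 (fun x => wa x + wb x) = 2^-1 - 2^-1 * 2^-1.
  rewrite ef (@Tq_lin R 2 ord0 wa wb 1 L_a L_b).
  apply: eq_trans; first exact: (lin3 1 T_a T_b B_ab).
  ring.
have Th : Tq ord0 (fun x => wa x - wb x) = 2^-1 - 2^-1 * 2^-1.
  rewrite eh (@Tq_lin R 2 ord0 wa wb (-1) L_a L_b).
  apply: eq_trans; first exact: (lin3 (-1) T_a T_b B_ab).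
  ring.
have Tg : Tq ord0 (fun x => (wa x + wb x) + (wa x - wb x)) = 1.
  rewrite eg (@Tq_lin R 2 ord0 wa wa 1 L_a L_a).
  apply: eq_trans; first exact: (lin3' 1 T_a B_aa).
  by field.
have E_nb : EI (cube 2) nb = - 2^-1.
  rewrite (EI_ext _ (fun x => (-1) * wb x)); last by move=> x; rewrite mulN1r.
  by rewrite EI_scale ?E_b ?mulN1r //; exact: Ii_sqi L_b.
have Vf : Var0 (fun x => wa x + wb x) = 2^-1.
  rewrite (Var_add L_a L_b) V_a V_b /Cov0 /mean0 !cintE E_ab E_a E_b; by field.
have Vh : Var0 (fun x => wa x - wb x) = 2^-1.
  have := Var_add L_a L_nb; rewrite /= => ->.
  rewrite V_a /Var0 /Cov0 /mean0 !cintE E_nb E_a.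
  rewrite (EI_ext (fun x => nb x ^+ 2) (fun x => wb x ^+ 2));
    last by move=> x; rewrite /nb sqrrN.
  rewrite E_b2 (EI_ext (fun x => wa x * nb x) (fun x => (-1) * (wa x * wb x))); last first.
    by move=> x; rewrite /nb mulrN mulN1r.
  rewrite EI_scale ?E_ab; last exact: Ii_mul L_a L_b.
  by field.
have Vg : Var0 (fun x => (wa x + wb x) + (wa x - wb x)) = 1.
  have -> : (fun x => (wa x + wb x) + (wa x - wb x)) = (fun x => wa x + wa x).
    by apply/funext => x; rewrite addrACA subrr addr0.
  rewrite (Var_add L_a L_a) V_a /Cov0 /mean0 !cintE E_aa E_a; by field.
have Cfh : Cov0 (fun x => wa x + wb x) (fun x => wa x - wb x) = 0.
  rewrite /Cov0 /mean0 !cintE.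
  rewrite (EI_ext _ (fun x => wa x ^+ 2 + (-1) * wb x ^+ 2)); last first.
    by move=> x; ring.
  rewrite EI_add; [|exact: Ii_sq L_a|exact: Ii_scale _ (Ii_sq L_b)].
  rewrite EI_scale; last exact: Ii_sq L_b.
  rewrite E_a2 E_b2 EI_add; [|exact: Ii_sqi L_a|exact: Ii_sqi L_b].
  have -> : EI (cube 2) (fun x => wa x - wb x) = 0.
    rewrite EI_add; [|exact: Ii_sqi L_a|exact: Ii_sqi L_nb].
    by rewrite E_nb E_a subrr.
  by rewrite E_a E_b; ring.
exists (S (S O)); exists ord0; exists (fun x => wa x + wb x); exists (fun x => wa x - wb x).
split => //; split => //; split => //.
split; first by move=> ac; move: (aec_var0 Lf ac); rewrite Vf; lra.
split; first by move=> ac; move: (aec_var0 Lh ac); rewrite Vh; lra.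
split; first by rewrite Cfh.
rewrite /total_sobol.
change (c * Num.max (Tq ord0 (fun x => wa x + wb x) / Var0 (fun x => wa x + wb x))
  (Tq ord0 (fun x => wa x - wb x) / Var0 (fun x => wa x - wb x)) <
  Tq ord0 (fun x => (wa x + wb x) + (wa x - wb x)) /
  Var0 (fun x => (wa x + wb x) + (wa x - wb x))).
rewrite Tf Th Tg Vf Vh Vg maxxx divr1.
have -> : (2^-1 - 2^-1 * 2^-1) / 2^-1 = 2^-1 :> R by field.
lra.
Qed.

End P2.

Unset Implicit Arguments.
Local Close Scope classical_set_scope.

Theorem theoremB2 (R : realType) :
  (forall (n : nat) (i : 'I_n) (f h : n.-tuple (measurableTypeR R) -> R),
     (0 < n)%N ->
     inL2 f -> inL2 h -> ~ ae_constant f -> ~ ae_constant h ->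
     0 <= Cov0 f h ->
     let g := fun x => f x + h x in
     total_sobol i g <=
       (Num.sqrt (total_sobol i f * Var0 f)
        + Num.sqrt (total_sobol i h * Var0 h)) ^+ 2
       / (Var0 f + Var0 h)
     /\ total_sobol i g <= 2 * Num.max (total_sobol i f) (total_sobol i h))
  /\
  (forall c : R, c < 2 ->
     exists (n : nat) (i : 'I_n) (f h : n.-tuple (measurableTypeR R) -> R),
       (0 < n)%N /\ inL2 f /\ inL2 h /\ ~ ae_constant f /\ ~ ae_constant h /\
       0 <= Cov0 f h /\
       c * Num.max (total_sobol i f) (total_sobol i h)
         < total_sobol i (fun x => f x + h x)).
Proof.
split.
  by move=> n i f h _; exact: part1.
exact: part2.
Qed.
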